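(* Let $\phi$ be a partial listing of $A$, let $\alpha'=\alpha_k\cdots\alpha_{l+1}$ be a prefix with $3\le l+1\le k$, and let $d$ be an integer with $0<d<a_2-1$. If $\alpha'd$ is non-empty, then $\alpha'(d-1)$ is non-empty, and $\alpha'(d+1)$ becomes non-empty after at most one further call to Next$(\varnothing)$.
   Context: Let $k\ge 2$ and let $a_k,\dots,a_2$ be positive integers with $a_2\le a_i$ for all $2<i\le k$. Let $A=[a_k]\times\cdots\times[a_2]$, where $[a]=\{0,\dots,a-1\}$; elements are written $\alpha=\alpha_k\alpha_{k-1}\cdots\alpha_2$. A prefix of $\alpha$ is $\alpha_k\cdots\alpha_{l+1}$ for some $2\le l+1\le k$; $\varnothing$ denotes the empty prefix; for a tuple $\beta=\alpha_k\cdots\alpha_{l+1}$ and $i$, $\beta i$ denotes $\alpha_k\cdots\alpha_{l+1}i$. An array $\phi:A\to\{0,1\}$ is initialized to $0$ everywhere. A tuple $\beta$ (a prefix or an element) is non-empty if some $\alpha\in A$ having $\beta$ as a prefix (or equal to $\beta$) has $\phi(\alpha)=1$, empty otherwise, and full if all such $\alpha$ have $\phi(\alpha)=1$. The procedure Next$(\beta)$, for $\beta=\alpha_k\cdots\alpha_{l+1}$ (with $l=k$ for $\beta=\varnothing$): let $m$ be the least $i$ such that $\beta i$ is empty; if $l=2$, set $\phi(\beta m):=1$ and stop; otherwise, if $m\ge a_2$, replace $m$ by the least $i$ such that $\beta i$ is not full; then call Next$(\beta m)$. A partial listing of $A$ is an array $\phi$ obtained from the all-zero array by finitely many calls of Next$(\varnothing)$.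 *)

(* Defs.v *)
From mathcomp Require Import all_boot.
Set Implicit Arguments. Unset Strict Implicit. Unset Printing Implicit Defensive.

(* The dimension list [a : seq nat] is [a_k; a_(k-1); ...; a_2] (so k = size a + 1,
   and a_2 = last 0 a).  A tuple alpha_k ... alpha_(l+1) is the sequence
   [alpha_k; ...; alpha_(l+1)]; beta i is [rcons beta i].  The array phi is a
   function [seq nat -> bool]; only its values on elements of A matter. *)

Definition inA (a : seq nat) (alpha : seq nat) : bool :=
  all2 (fun x n => x < n) alpha a.

Definition is_prefixA (a : seq nat) (beta : seq nat) : Prop :=
  exists alpha, inA a alpha /\ prefix beta alpha.

Definition nonempty (a : seq nat) (phi : seq nat -> bool) (beta : seq nat) : Prop :=
  exists alpha, [/\ inA a alpha, prefix beta alpha & phi alpha].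

Definition empty (a : seq nat) (phi : seq nat -> bool) (beta : seq nat) : Prop :=
  ~ nonempty a phi beta.

Definition full (a : seq nat) (phi : seq nat -> bool) (beta : seq nat) : Prop :=
  forall alpha, inA a alpha -> prefix beta alpha -> phi alpha.

Definition is_least (P : nat -> Prop) (m : nat) : Prop :=
  P m /\ forall i, i < m -> ~ P i.

Definition set1 (phi : seq nat -> bool) (alpha : seq nat) : seq nat -> bool :=
  fun x => (x == alpha) || phi x.

(* The procedure Next, as a (deterministic) big-step relation:
   [Next a beta phi phi'] means that calling Next(beta) on the array phi
   terminates with the array phi'.  beta = alpha_k..alpha_(l+1) has size k-l;
   the case l = 2 is size beta = k - 2 = (size a).-1. *)
Inductive Next (a : seq nat) : seq nat -> (seq nat -> bool) -> (seq nat -> bool) -> Prop :=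
| Next_leaf beta phi m :
    size beta = (size a).-1 ->
    is_least (fun i => empty a phi (rcons beta i)) m ->
    Next a beta phi (set1 phi (rcons beta m))
| Next_inner beta phi m m' phi' :
    size beta < (size a).-1 ->
    is_least (fun i => empty a phi (rcons beta i)) m ->
    ((m < last 0 a /\ m' = m) \/
     (last 0 a <= m /\ is_least (fun i => ~ full a phi (rcons beta i)) m')) ->
    Next a (rcons beta m') phi phi' ->
    Next a beta phi phi'.

Inductive partial_listing (a : seq nat) : (seq nat -> bool) -> Prop :=
| pl_init : partial_listing a (fun _ => false)
| pl_step phi phi' : partial_listing a phi -> Next a [::] phi phi' ->
    partial_listing a phi'.

(* Main.v *)
Require Import Defs.
From mathcomp Require Import all_boot.
From Stdlib Require Import Classical.
From mathcomp Require Import zify.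

Lemma inAP a s : inA a s <-> size s = size a /\ (forall i, i < size a -> nth 0 s i < nth 0 a i).
Proof.
rewrite /inA; elim: s a => [|x s IH] [|n a] /=; split => //.
- by case.
- by case.
- move/andP=> [hx /IH [hs hi]]; split; first by rewrite hs.
  by case=> [|i] //= /hi.
- case=> [[hs] hi]; apply/andP; split; first exact: (hi 0).
  by apply/IH; split=> // i hl; exact: (hi i.+1).
Qed.

Lemma prefix_nth (s t : seq nat) i : prefix s t -> i < size s -> nth 0 t i = nth 0 s i.
Proof.
by rewrite prefixE => /eqP hs hi; rewrite -{1}hs nth_take.
Qed.

Lemma nonempty_prefix a phi (s t : seq nat) : prefix s t -> nonempty a phi t -> nonempty a phi s.
Proof. by move=> hst [al [h1 h2 h3]]; exists al; split=> //; apply: prefix_trans h2. Qed.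

Lemma full_prefix a phi (s t : seq nat) : prefix s t -> full a phi s -> full a phi t.
Proof. by move=> hst hf al h1 h2; apply: hf => //; apply: prefix_trans h2. Qed.

Lemma no_ext a (al b : seq nat) x : inA a al -> prefix (rcons b x) al -> x < nth 0 a (size b).
Proof.
move=> /inAP [hs hi] hp.
have hsz := size_prefix hp; rewrite size_rcons in hsz.
have := @prefix_nth _ _ (size b) hp; rewrite size_rcons ltnSn nth_rcons ltnn eqxx => <- //.
by apply: hi; rewrite -hs.
Qed.

Lemma big_child a phi (b : seq nat) x : nth 0 a (size b) <= x ->
  empty a phi (rcons b x) /\ full a phi (rcons b x).
Proof.
move=> hx; split.
- by move=> [al [h1 h2 _]]; have := @no_ext _ _ _ _ h1 h2; rewrite ltnNge hx.
- by move=> al h1 h2; have := @no_ext _ _ _ _ h1 h2; rewrite ltnNge hx.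
Qed.

Definition compl (a b : seq nat) := b ++ nseq (size a - size b) 0.

Lemma ext_valid a (al b : seq nat) x : all (fun x => 0 < x) a -> inA a al -> prefix b al ->
  size b < size a -> x < nth 0 a (size b) ->
  inA a (compl a (rcons b x)) /\ prefix (rcons b x) (compl a (rcons b x)).
Proof.
move=> hpos hA hp hsb hx; split; last exact: prefix_prefix.
have [hs hi] := (inAP a al).1 hA.
apply/inAP; split.
  by rewrite /compl size_cat size_nseq size_rcons subnKC.
move=> i hia; rewrite /compl nth_cat size_rcons nth_rcons nth_nseq.
case: (ltngtP i (size b)) => h2.
- rewrite -(@prefix_nth _ _ _ hp h2) (_ : i < (size b).+1 = true); last by lia.
  exact: hi hia.
- rewrite (_ : i < (size b).+1 = false); last by lia.
  rewrite (_ : (i - (size b).+1 < size a - (size b).+1) = true); last by lia.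
  by move/all_nthP: hpos; apply.
- by subst i; rewrite ltnSn.
Qed.

Lemma ex_least (P : nat -> Prop) n : P n -> exists m, is_least P m.
Proof.
move=> hn; suff: forall k, (exists i, i <= k /\ P i) -> exists m, is_least P m.
  by apply; exists n.
elim=> [|k IH] [i [hi hP]].
  by exists 0; move: hi; rewrite leqn0 => /eqP hi; subst; split.
case: (classic (exists j, j <= k /\ P j)) => [h|h]; first exact: IH.
exists i; split=> // j hj hPj; apply: h; exists j; split=> //.
lia.
Qed.
Arguments prefix_nth {s t i}.
Arguments nonempty_prefix {a phi s t}.
Arguments full_prefix {a phi s t}.
Arguments no_ext {a al b x}.
Arguments ext_valid {a al b x}.
Arguments ex_least {P n}.

Definition Qn a phi (p : seq nat) n :=
  (forall y, y < nth 0 p n -> nonempty a phi (rcons (take n p) y)) /\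
  (n < (size a).-1 ->
     (empty a phi (rcons (take n p) (nth 0 p n)) /\ nth 0 p n < last 0 a) \/
     ((forall y, y < last 0 a -> nonempty a phi (rcons (take n p) y)) /\
      ~ full a phi (rcons (take n p) (nth 0 p n)) /\
      (forall y, y < nth 0 p n -> full a phi (rcons (take n p) y)))) /\
  (n = (size a).-1 -> empty a phi (rcons (take n p) (nth 0 p n))).

Lemma last_pos a : 0 < size a -> all (fun x => 0 < x) a -> 0 < last 0 a.
Proof. by move=> hs /all_nthP; rewrite -nth_last; apply; rewrite prednK. Qed.

Lemma last_le a i : all (fun x => last 0 a <= x) a -> i < size a -> last 0 a <= nth 0 a i.
Proof. by move=> /all_nthP h hi; apply: h. Qed.

Lemma nne a phi b : ~ empty a phi b -> nonempty a phi b.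
Proof. exact: NNPP. Qed.

Lemma next_path a b phi phi' : all (fun x => 0 < x) a -> all (fun x => last 0 a <= x) a ->
  0 < size a -> Next a b phi phi' -> size b <= (size a).-1 ->
  exists p, phi' = Defs.set1 phi p /\ size p = size a /\ take (size b) p = b /\
    forall n, size b <= n < size a -> Qn a phi p n.
Proof.
move=> hpos hle hsa H; elim: H => {b phi phi'}.
- move=> b phi m hsz [hm hlt] _; exists (rcons b m); split=> //.
  split; first by rewrite size_rcons hsz prednK.
  split; first by rewrite -cats1 take_size_cat.
  move=> n /andP [h1 h2]; have hn : n = size b by lia.
  subst n; rewrite /Qn -cats1 take_size_cat // nth_cat ltnn subnn /=.
  split; first by move=> y hy; apply: nne; apply: hlt.
  split; first by move=> h; lia.
  by [].
- move=> b phi m m' phi' hsz [hm hlt] hcase Hn IH _.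
  have [|p [-> [hps [htk hQ]]]] := IH; first by rewrite size_rcons.
  have htk' : take (size b) p = b.
    by rewrite -(take_takel _ (leqnSn _)) -(size_rcons b m') htk -cats1 take_size_cat.
  have hnth : nth 0 p (size b) = m'.
    by rewrite -(nth_take _ (ltnSn (size b))) -(size_rcons b m') htk nth_rcons ltnn eqxx.
  exists p; split=> //; split=> //; split=> //.
  move=> n /andP [h1 h2]; case: (ltngtP n (size b)) => hnb; first by lia.
  + by apply: hQ; rewrite size_rcons hnb h2.
  subst n; rewrite /Qn htk' hnth.
  have hlp := @last_pos a hsa hpos.
  case: hcase => [[hml ->] | [hml hl']].
  * split; first by move=> y hy; apply: nne; apply: hlt.
    split; last by move=> h; lia.
    by move=> _; left.
  * have [hm'f hm'lt] := hl'.
    have hm'm : m' <= m.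
      rewrite leqNgt; apply/negP => hmm.
      have hfm : full a phi (rcons b m) by apply: NNPP; apply: hm'lt.
      have [al [hA hpr _]] : nonempty a phi (rcons b 0) by apply: nne; apply: hlt; lia.
      have hpb : prefix b al := prefix_trans (prefix_rcons b 0) hpr.
      case: (ltnP m (nth 0 a (size b))) => hmb.
      - have [hA' hp'] := @ext_valid _ _ _ _ hpos hA hpb h2 hmb.
        apply: hm; exists (compl a (rcons b m)); split=> //; exact: hfm.
      - apply: hm'f; apply: (@big_child a phi b m' _).2; lia.
    split; first by move=> y hy; apply: nne; apply: hlt; lia.
    split; last by move=> h; lia.
    move=> _; right; split; first by move=> y hy; apply: nne; apply: hlt; lia.
    split=> // y hy; apply: NNPP; exact: hm'lt.
Qed.
Arguments next_path {a b phi phi'}.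
Arguments last_pos {a}.
Arguments last_le {a i}.

Definition I1 a phi := forall (b : seq nat) i, nonempty a phi (rcons b i.+1) -> nonempty a phi (rcons b i).
Definition J a phi := forall (r : seq nat) z w, nonempty a phi (rcons (rcons r z ++ w) 1) ->
  (forall y, y < z -> full a phi (rcons r y)) /\ (forall y, y < last 0 a -> nonempty a phi (rcons r y)).

Lemma set1_nonempty a phi p s : nonempty a (Defs.set1 phi p) s -> nonempty a phi s \/ (inA a p /\ prefix s p).
Proof.
move=> [al [hA hp]]; rewrite /Defs.set1; case/orP => [/eqP e|h].
  by subst; right.
by left; exists al.
Qed.
Arguments set1_nonempty {a phi p s}.

Lemma mono_ne a phi p s : nonempty a phi s -> nonempty a (Defs.set1 phi p) s.
Proof. by move=> [al [h1 h2 h3]]; exists al; split=> //; rewrite /Defs.set1 h3 orbT. Qed.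
Arguments mono_ne {a phi p s}.

Lemma mono_full a phi p s : full a phi s -> full a (Defs.set1 phi p) s.
Proof. by move=> h al h1 h2; rewrite /Defs.set1 (h al h1 h2) orbT. Qed.
Arguments mono_full {a phi p s}.

Lemma prefix_rcons_take (t p : seq nat) x : prefix (rcons t x) p ->
  take (size t) p = t /\ nth 0 p (size t) = x /\ size t < size p.
Proof.
move=> h; have hs := size_prefix h; rewrite size_rcons in hs.
split; last split=> //.
- have := prefix_trans (prefix_rcons t x) h; rewrite prefixE => /eqP //.
- by rewrite (@prefix_nth _ _ _ h) ?size_rcons // nth_rcons ltnn eqxx.
Qed.
Arguments prefix_rcons_take {t p x}.

Lemma inv_step a phi phi' : all (fun x => 0 < x) a -> all (fun x => last 0 a <= x) a ->
  0 < size a -> Next a [::] phi phi' -> I1 a phi /\ J a phi -> I1 a phi' /\ J a phi'.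
Proof.
move=> hpos hle hsa hN [hI hJ].
have [|p [-> [hps [_ hQ]]]] := @next_path _ _ _ _ hpos hle hsa hN; first by [].
rewrite /Qn in hQ.
split.
- move=> b i /set1_nonempty [/hI h|[hA hp]]; first exact: mono_ne.
  have [ht [hx hsz]] := prefix_rcons_take hp.
  have hsb : size (@nil nat) <= size b < size a by rewrite -hps hsz.
  have [hb _] := hQ _ hsb.
  apply: mono_ne; rewrite -{1}ht; apply: hb; rewrite hx; lia.
- move=> r z w /set1_nonempty [/hJ [h1 h2]|[hA hp]].
    by split=> y hy; [apply: mono_full; apply: h1 | apply: mono_ne; apply: h2].
  set t := rcons r z ++ w in hp.
  have [ht [hx hsz]] := prefix_rcons_take hp.
  have hsb : size (@nil nat) <= size t < size a by rewrite -hps hsz.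
  have [hb _] := hQ _ hsb.
  have h0 : nonempty a phi (rcons t 0) by rewrite -ht; apply: hb; rewrite hx.
  have hrz : nonempty a phi (rcons r z).
    by apply: nonempty_prefix h0; exact: prefix_trans (prefix_prefix _ _) (prefix_rcons _ _).
  have hp2 : prefix (rcons r z) p.
    by apply: prefix_trans hp; exact: prefix_trans (prefix_prefix _ _) (prefix_rcons _ _).
  have [ht2 [hx2 hsz2]] := prefix_rcons_take hp2.
  have hst : size t = (size r + size w).+1 by rewrite /t size_cat size_rcons.
  have hsr : size (@nil nat) <= size r < size a by rewrite -hps hsz2.
  have [_ [hd _]] := hQ _ hsr.
  have hsr2 : size r < (size a).-1.
    have := size_prefix hp; rewrite size_rcons hst hps; lia.
  case: (hd hsr2); rewrite ht2 hx2.
    by move=> [he _].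
  move=> [h1 [_ h3]].
  by split=> y hy; [apply: mono_full; apply: h3 | apply: mono_ne; apply: h1].
Qed.

Lemma inv_pl a phi : all (fun x => 0 < x) a -> all (fun x => last 0 a <= x) a ->
  0 < size a -> partial_listing a phi -> I1 a phi /\ J a phi.
Proof.
move=> hpos hle hsa; elim=> [|phi0 phi1 _ IH hN].
  by split=> [b i|r z w] [al [_ _ h]].
exact: inv_step hN IH.
Qed.

Arguments inv_pl {a phi}.
Arguments inv_step {a phi phi'}.

Lemma I1_le a phi : I1 a phi -> forall (b : seq nat) i j, j <= i ->
  nonempty a phi (rcons b i) -> nonempty a phi (rcons b j).
Proof.
move=> hI b; elim=> [|i IH] j hj h.
  by move: hj; rewrite leqn0 => /eqP ->.
case: (ltngtP j i.+1) => hji.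
- by apply: IH; [lia | apply: hI].
- lia.
- by rewrite hji.
Qed.

Lemma next_exists a phi : all (fun x => 0 < x) a -> all (fun x => last 0 a <= x) a ->
  0 < size a -> forall k (b : seq nat), (size a).-1 - size b = k -> size b <= (size a).-1 ->
  ~ full a phi b -> exists phi', Next a b phi phi'.
Proof.
move=> hpos hle hsa; elim=> [|k IH] b hk hb hnf.
all: have [m hm] : exists m, is_least (fun i => empty a phi (rcons b i)) m
  by apply: (@ex_least _ (nth 0 a (size b))); exact: (@big_child a phi b _ (leqnn _)).1.
  exists (Defs.set1 phi (rcons b m)); apply: Next_leaf => //; lia.
have hlt : size b < (size a).-1 by lia.
have [al [hA [hp hpa]]] : exists al, inA a al /\ prefix b al /\ ~ phi al.
  apply: NNPP => hc; apply: hnf => al h1 h2; apply: NNPP => h3; apply: hc; by exists al.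
have hsb : size b < size a by lia.
case: (ltnP m (last 0 a)) => hml.
- have hmb : m < nth 0 a (size b) by apply: (leq_trans hml); apply: last_le.
  have [hcA hcp] := ext_valid hpos hA hp hsb hmb.
  have hnf' : ~ full a phi (rcons b m).
    move=> hf; apply: hm.1; exists (compl a (rcons b m)); split=> //; exact: hf.
  have [phi' hN] := IH (rcons b m) (ltac:(rewrite size_rcons; lia)) (ltac:(rewrite size_rcons; lia)) hnf'.
  exists phi'; apply: (@Next_inner a b phi m m phi') => //; by left.
- have [m' hm'] : exists m', is_least (fun i => ~ full a phi (rcons b i)) m'.
    apply: (@ex_least _ (nth 0 al (size b))) => hf; apply: hpa; apply: hf => //.
    have hsal : size b < size al by have [-> _] := (inAP a al).1 hA.
    have hbe : take (size b) al = b by move: hp; rewrite prefixE => /eqP.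
    by rewrite -{1}hbe -take_nth // prefix_take.
  have [phi' hN] := IH (rcons b m') (ltac:(rewrite size_rcons; lia)) (ltac:(rewrite size_rcons; lia)) hm'.1.
  exists phi'; apply: (@Next_inner a b phi m m' phi') => //; by right.
Qed.
Arguments I1_le {a phi}.

Theorem lemma7 (a : seq nat) (phi : seq nat -> bool) (alpha' : seq nat) (d : nat) :
  0 < size a ->                          (* k >= 2 *)
  all (fun x => 0 < x) a ->              (* a_i positive *)
  all (fun x => last 0 a <= x) a ->      (* a_2 <= a_i *)
  partial_listing a phi ->
  is_prefixA a alpha' ->
  0 < size alpha' <= (size a).-1 ->      (* 3 <= l+1 <= k *)
  0 < d -> d < last 0 a - 1 ->
  nonempty a phi (rcons alpha' d) ->
  nonempty a phi (rcons alpha' d.-1) /\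
  (nonempty a phi (rcons alpha' d.+1) \/
   ((exists phi', Next a [::] phi phi') /\
    forall phi', Next a [::] phi phi' -> nonempty a phi' (rcons alpha' d.+1))).
Proof.
move=> hsa hpos hle hpl [al0 [hA0 hpre0]] /andP [hs0 hs1] hd0 hd1 hne.
have [hI hJ] := inv_pl hpos hle hsa hpl.
split.
  by apply: hI; rewrite prednK.
case: (classic (nonempty a phi (rcons alpha' d.+1))) => hne1; first by left.
right.
set s := size alpha'.
have hsa1 : s < size a by lia.
have hdl : d.+1 < nth 0 a s by apply: (leq_trans _ (last_le hle hsa1)); lia.
have [hcA hcp] := ext_valid hpos hA0 hpre0 hsa1 hdl.
set c := compl a (rcons alpha' d.+1) in hcA hcp.
have hFc : ~ phi c by move=> h; apply: hne1; exists c.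
split.
  apply: (@next_exists a phi hpos hle hsa _ [::] erefl) => //.
  by move=> hf; apply: hFc; apply: hf _ hcA (prefix0s _).
move=> phi' hN.
have [|p [-> [hps [_ hQ]]]] := next_path hpos hle hsa hN; first by [].
rewrite /Qn in hQ.
have hne1' : nonempty a phi (rcons alpha' 1) := I1_le hI alpha' _ _ hd0 hne.
have htk : forall j, j <= s -> take j p = take j alpha'.
  elim=> [|j IH] hj; first by rewrite !take0.
  have hjs : j < s by lia.
  have IHj := IH (ltnW hj).
  set r := take j alpha'.
  set z := nth 0 alpha' j.
  set x := nth 0 p j.
  have hta : take j.+1 alpha' = rcons r z by rewrite /r /z (take_nth 0).
  have htp : take j.+1 p = rcons (take j p) x by rewrite /x (take_nth 0) // hps; lia.
  rewrite hta htp IHj; congr rcons.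
  have hnz : nonempty a phi (rcons r z).
    apply: nonempty_prefix hne; rewrite -hta.
    exact: prefix_trans (prefix_take _ _) (prefix_rcons _ _).
  have [hfull hne2] : (forall y, y < z -> full a phi (rcons r y)) /\
     (forall y, y < last 0 a -> nonempty a phi (rcons r y)).
    apply: (hJ r z (drop j.+1 alpha')).
    by rewrite -hta cat_take_drop.
  have hjb : size (@nil nat) <= j < size a by apply/andP; split=> //; lia.
  have [hb [hd _]] := hQ j hjb.
  rewrite IHj -/r -/x in hb hd.
  have hja : j < (size a).-1 by lia.
  case: (ltngtP x z) => hxz //.
  + have hfx := hfull _ hxz.
    have hnx : nonempty a phi (rcons r x) := I1_le hI r _ _ (ltnW hxz) hnz.
    exfalso; case: (hd hja) => [[he _] | [_ [hnf _]]]; [exact: he hnx | exact: hnf hfx].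
  + case: (hd hja) => [[he hxl] | [_ [_ hf]]].
      by exfalso; apply: he; apply: hne2.
    exfalso; apply: hFc; apply: (hf z hxz) => //.
    apply: prefix_trans hcp; apply: prefix_trans (prefix_rcons _ d.+1).
    by rewrite -hta prefix_take.
have hts : take s p = alpha' by rewrite htk // take_size.
have hsb : size (@nil nat) <= s < size a by apply/andP; split=> //; lia.
have [hb [hd he]] := hQ s hsb.
rewrite hts in hb hd he.
have hx : nth 0 p s = d.+1.
  have hxle : nth 0 p s <= d.+1.
    by rewrite leqNgt; apply/negP => h; apply: hne1; apply: hb.
  suff : ~ nth 0 p s < d.+1 by lia.
  move=> h.
  have hnx : nonempty a phi (rcons alpha' (nth 0 p s)) := I1_le hI alpha' d _ h hne.
  case: (ltngtP s (size a).-1) => hss.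
  + case: (hd hss) => [[he' _] | [h1 _]]; first exact: he' hnx.
    by apply: hne1; apply: h1; lia.
  + lia.
  + exact: (he hss) hnx.
have htk1 : take s.+1 p = rcons alpha' d.+1 by rewrite (take_nth 0) ?hps // hts hx.
have hpA : inA a p.
  apply/inAP; split=> // i hi.
  case: (ltngtP i s) => his.
  + have [hs2 hi2] := (inAP a al0).1 hA0.
    rewrite -(nth_take 0 his) hts -(prefix_nth hpre0 his); exact: hi2.
  + have hz : nth 0 p i = 0.
      have hib : size (@nil nat) <= i < size a by apply/andP; split=> //; lia.
      have [hb2 _] := hQ i hib.
      case: (posnP (nth 0 p i)) => // hp0; exfalso.
      apply: hne1; apply: nonempty_prefix (hb2 0 hp0).
      rewrite -htk1; apply: prefix_trans (prefix_rcons _ _).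
      by rewrite -(take_takel p (_ : s.+1 <= i)) ?prefix_take.
    by rewrite hz; move/all_nthP: hpos; apply.
  + by rewrite his hx.
exists p; split=> //; last by rewrite /Defs.set1 eqxx.
by rewrite -htk1 prefix_take.
Qed.
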